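(* Assume $\chi$ is weakly generic, let $\sigma=\sigma_{a,b}$ be a Serre weight with $\mathcal{S}(\chi_1,\chi_2,\sigma)\neq\varnothing$, let $(J,x)$ be its maximal element, and let $s,t,r,\mathcal{I}_\tau,\xi_\tau$ be as in the context. Then for every $\tau\in\Sigma$ and every $c\in\mathcal{I}_\tau$ we have $v_p(\xi_\tau-c(p^f-1))>0$ if and only if either $c=t_\tau$, or [$t_\kappa=0$, $s_\kappa=p-1+e$ and $r_\kappa=p$ for all $\kappa\in\Sigma$, and $c=p$].
   Context: Let $p$ be a prime, $K/\mathbf{Q}_p$ finite with residue field $k$, residue degree $f$, ramification index $e$; $I_K$ inertia; $v_p$ is the $p$-adic valuation on $\mathbf{Q}$. Fix $\varpi\in\overline{K}$ with $\varpi^{p^f-1}$ a uniformiser; $\omega\colon G_K\to k^\times$ sends $g$ to the reduction of $g(\varpi)/\varpi$. $\Sigma=\mathrm{Hom}_{\mathbf{F}_p}(k,\overline{\mathbf{F}}_p)$, $\varphi(x)=x^p$, $\omega_\tau=\tau\circ\omega$, $\Omega_{\tau,a}=\sum_{i=0}^{f-1}p^ia_{\tau\circ\varphi^i}$. $\chi_1,\chi_2\colon G_K\to\overline{\mathbf{F}}_p^\times$ continuous, $\chi=\chi_1\chi_2^{-1}=\psi\prod_\tau\omega_\tau^{n_\tau}$, $\psi$ unramified, $n_\tau\in[1,p]$, some $n_\tau<p$. Weakly generic: $n_\tau\in[e,p-e]$ for all $\tau$. Serre weight $\sigma_{a,b}=\bigotimes_\tau(\det^{b_\tau}\otimes\mathrm{Sym}^{a_\tau-b_\tau}k^2)\otimes_{k,\tau}\overline{\mathbf{F}}_p$,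 $a_\tau-b_\tau\in[0,p-1]$; $r_\tau=a_\tau-b_\tau+1$. $\mathcal{S}(\chi_1,\chi_2,\sigma)$: pairs $(J,x)$, $J\subseteq\Sigma$, $x_\tau\in[0,e-1]$, with $\chi_1|_{I_K}=\prod_{\tau\in J}\omega_\tau^{a_\tau+1+x_\tau}\prod_{\tau\notin J}\omega_\tau^{b_\tau+x_\tau}$ and $\chi_2|_{I_K}=\prod_{\tau\notin J}\omega_\tau^{a_\tau+e-x_\tau}\prod_{\tau\in J}\omega_\tau^{b_\tau+e-1-x_\tau}$. $s(J,x)_\tau=r_\tau+x_\tau$ if $\tau\in J$, $x_\tau$ if $\tau\notin J$. Order: $(J,x)\preceq(J',x')$ iff $\Omega_{\tau,s(J',x')-s(J,x)}\in(p^f-1)\mathbf{Z}_{\ge0}$ for all $\tau$; a non-empty $\mathcal{S}$ has a unique maximal element. For the maximal $(J,x)$: $s=s(J,x)$, $t_\tau=a_\tau-b_\tau+e-s_\tau$, $\mathcal{I}_\tau=[0,s_\tau-1]$ if $\tau\notin J$, $\mathcal{I}_\tau=\{t_\tau\}\cup[r_\tau,s_\tau-1]$ if $\tau\in J$, and $\xi_\tau=(p^f-1)s_\tau+\Omega_{\tau,s-t}$. *)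

(* Defs.v *)
(* Arithmetic model of the setting of Proposition 5.11.
   Sigma = Hom_{F_p}(k, Fpbar) is indexed by 'I_f : index i stands for
   tau_0 o phi^i, so that (tau_i o phi^j) = tau_{(i+j) mod f}.
   A character of I_K of the form prod_tau omega_tau^{m_tau} is recorded by
   its exponent class modulo p^f - 1 with respect to omega_{tau_0}
   (omega_{tau_i} = omega_{tau_0}^{p^i}, and omega_{tau_0} has exact order
   p^f - 1 on I_K). *)
From mathcomp Require Import all_boot all_order all_algebra.
Set Implicit Arguments. Unset Strict Implicit. Unset Printing Implicit Defensive.
Import Order.TTheory GRing.Theory Num.Theory.
Local Open Scope ring_scope.

Lemma ord_pos (f : nat) (i : 'I_f) : (0 < f)%N.
Proof. exact: leq_ltn_trans (leq0n i) (ltn_ord i). Qed.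

Definition oshift (f : nat) (i : 'I_f) (j : nat) : 'I_f :=
  Ordinal (ltn_pmod (i + j) (ord_pos i)).

Definition Omega (p f : nat) (tau : 'I_f) (a : 'I_f -> int) : int :=
  \sum_(j < f) (p ^ j)%:Z * a (oshift tau j).

Definition qm1 (p f : nat) : int := (p ^ f)%:Z - 1.

Definition rr (f : nat) (a b : 'I_f -> int) (tau : 'I_f) : int :=
  a tau - b tau + 1.

Definition sJx (f : nat) (a b : 'I_f -> int) (J : {set 'I_f}) (x : 'I_f -> nat)
  (tau : 'I_f) : int :=
  if tau \in J then rr a b tau + (x tau)%:Z else (x tau)%:Z.

(* (J,x) \in S(chi_1, chi_2, sigma_{a,b}); u1, u2 are the exponents of
   chi_1|_{I_K}, chi_2|_{I_K} w.r.t. omega_{tau0}. *)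
Definition inS (p f e : nat) (tau0 : 'I_f) (u1 u2 : int) (a b : 'I_f -> int)
  (J : {set 'I_f}) (x : 'I_f -> nat) : Prop :=
  [/\ forall tau, (x tau < e)%N,
      (u1 = Omega p tau0 (fun tau => if tau \in J then a tau + 1 + (x tau)%:Z
                                      else b tau + (x tau)%:Z) %[mod qm1 p f])%Z
    & (u2 = Omega p tau0 (fun tau => if tau \in J then b tau + e%:Z - 1 - (x tau)%:Z
                                      else a tau + e%:Z - (x tau)%:Z) %[mod qm1 p f])%Z].

Definition precS (p f : nat) (a b : 'I_f -> int)
  (J : {set 'I_f}) (x : 'I_f -> nat) (J' : {set 'I_f}) (x' : 'I_f -> nat) : Prop :=
  forall tau : 'I_f, exists k : nat,
    Omega p tau (fun kappa => sJx a b J' x' kappa - sJx a b J x kappa) = qm1 p f * k%:Z.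

Definition maximalS (p f e : nat) (tau0 : 'I_f) (u1 u2 : int) (a b : 'I_f -> int)
  (J : {set 'I_f}) (x : 'I_f -> nat) : Prop :=
  inS p e tau0 u1 u2 a b J x /\
  forall (J' : {set 'I_f}) (x' : 'I_f -> nat),
    inS p e tau0 u1 u2 a b J' x' -> precS p a b J x J' x' -> precS p a b J' x' J x.

Definition tt (f e : nat) (a b : 'I_f -> int) (J : {set 'I_f}) (x : 'I_f -> nat)
  (tau : 'I_f) : int :=
  a tau - b tau + e%:Z - sJx a b J x tau.

Definition inI (f e : nat) (a b : 'I_f -> int) (J : {set 'I_f}) (x : 'I_f -> nat)
  (tau : 'I_f) (c : int) : Prop :=
  if tau \in J then c = tt e a b J x tau \/ (rr a b tau <= c <= sJx a b J x tau - 1)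
  else 0 <= c <= sJx a b J x tau - 1.

Definition xi (p f e : nat) (a b : 'I_f -> int) (J : {set 'I_f}) (x : 'I_f -> nat)
  (tau : 'I_f) : int :=
  qm1 p f * sJx a b J x tau
  + Omega p tau (fun kappa => sJx a b J x kappa - tt e a b J x kappa).

(* v_p(z) > 0 for an integer z (v_p(0) = +oo), i.e. p divides z *)
Definition vp_pos (p : nat) (z : int) : Prop := (p%:Z %| z)%Z.

(* Main.v *)
Require Import Defs.
From mathcomp Require Import all_boot all_order all_algebra.
From mathcomp Require Import zify ring lra.
Import Order.TTheory GRing.Theory Num.Theory.
Set Implicit Arguments. Unset Strict Implicit.
Local Open Scope ring_scope.

Lemma PoszX' (m k : nat) : ((m ^ k)%N)%:Z = (m%:Z) ^+ k.
Proof. elim: k => [|k IH]; first by rewrite expr0. by rewrite expnS PoszM IH exprS. Qed.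

Lemma oshiftD (f : nat) (tau : 'I_f) i j : oshift (oshift tau i) j = oshift tau (i + j).
Proof. apply: val_inj => /=. by rewrite modnDml addnA. Qed.

Lemma oshift0 (f : nat) (tau : 'I_f) : oshift tau 0 = tau.
Proof. apply: val_inj => /=. by rewrite addn0 modn_small. Qed.

Lemma oshiftf (f : nat) (tau : 'I_f) : oshift tau f = tau.
Proof. apply: val_inj => /=. by rewrite modnDr modn_small. Qed.

Lemma oshift_surj (f : nat) (tau kappa : 'I_f) : exists j : 'I_f, oshift tau j = kappa.
Proof.
have hf := ord_pos tau.
exists (Ordinal (ltn_pmod (kappa + (f - tau)) hf)).
apply: val_inj => /=.
rewrite modnDmr.
have -> : (tau + (kappa + (f - tau)) = kappa + f)%N by have := ltn_ord tau; lia.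
by rewrite modnDr modn_small.
Qed.

Lemma Omega_shift (p f : nat) (tau : 'I_f) (v : 'I_f -> int) :
  Omega p tau v + qm1 p f * v tau = p%:Z * Omega p (oshift tau 1) v.
Proof.
case: f tau v => [|f] tau v; first by case: tau.
rewrite /Omega mulr_sumr big_ord_recl big_ord_recr /= oshift0.
have -> : \sum_(i < f) p%:Z * ((p ^ i)%N%:Z * v (oshift (oshift tau 1) (widen_ord (leqnSn f) i)))
  = \sum_(i < f) ((p ^ (bump 0 i))%N%:Z * v (oshift tau (bump 0 i))).
  apply: eq_bigr => i _; rewrite oshiftD /bump /= add1n expnS PoszM. ring.
rewrite oshiftD add1n oshiftf /qm1 expnS PoszM expn0. ring.
Qed.

Definition G (p f : nat) : int := \sum_(j < f) (p ^ j)%N%:Z.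

Lemma Omega_const (p f : nat) (tau : 'I_f) (c : int) :
  Omega p tau (fun _ => c) = G p f * c.
Proof. by rewrite /Omega /G mulr_suml. Qed.

Lemma G_q (p f : nat) : (p%:Z - 1) * G p f = qm1 p f.
Proof.
rewrite /G /qm1; elim: f => [|f IH]; first by rewrite big_ord0 expn0; ring.
rewrite big_ord_recr /= mulrDr IH expnS PoszM. ring.
Qed.

Lemma G_pos (p f : nat) : (0 < f)%N -> 1 <= G p f.
Proof.
case: f => [//|f] _; rewrite /G big_ord_recl /= expn0.
rewrite lerDl; apply: sumr_ge0 => i _; by [].
Qed.

Lemma Omega_le (p f : nat) (tau : 'I_f) (v w : 'I_f -> int) :
  (forall k, v k <= w k) -> Omega p tau v <= Omega p tau w.
Proof.
move=> h; rewrite /Omega; apply: ler_sum => i _.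
apply: ler_wpM2l; [by [] | exact: h].
Qed.

Lemma OmegaB (p f : nat) (tau : 'I_f) (v w : 'I_f -> int) :
  Omega p tau (fun k => v k - w k) = Omega p tau v - Omega p tau w.
Proof. rewrite /Omega -sumrB; apply: eq_bigr => j _; by rewrite mulrBr. Qed.

Lemma Omega_eq_le (p f : nat) (hp : (0 < p)%N) (tau : 'I_f) (v w : 'I_f -> int) :
  (forall k, v k <= w k) -> Omega p tau v = Omega p tau w -> forall k, v k = w k.
Proof.
move=> h heq k.
have h0 : Omega p tau (fun k => w k - v k) = 0 by rewrite OmegaB heq subrr.
rewrite /Omega in h0.
have hnn : forall i : 'I_f, true -> 0 <= (p ^ i)%N%:Z * (w (oshift tau i) - v (oshift tau i)).
  move=> i _; apply: mulr_ge0; first by []. by rewrite subr_ge0.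
have := psumr_eq0P hnn h0.
case: (oshift_surj tau k) => j hj.
move=> /(_ j isT).
move/eqP; rewrite mulf_eq0 hj => /orP [|/eqP]; last by move=> H; apply/eqP; rewrite eq_sym -subr_eq0 H.
rewrite PoszX' expf_eq0 /=; move=> /andP [_ /eqP hp0]. move: hp. rewrite -ltz_nat hp0 //.
Qed.


Lemma q_dvd_step (p f : nat) (tau : 'I_f) (v : 'I_f -> int) :
  (qm1 p f %| Omega p tau v)%Z -> (qm1 p f %| Omega p (oshift tau 1) v)%Z.
Proof.
case: f tau v => [|f] tau v; first by case: tau.
move=> h.
have hs := Omega_shift p tau v.
have h1 : (qm1 p f.+1 %| p%:Z * Omega p (oshift tau 1) v)%Z.
  by rewrite -hs; apply: rpredD => //; apply/dvdzP; exists (v tau); by rewrite mulrC.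
set W := Omega p (oshift tau 1) v in hs h1 *.
have -> : W = (p ^ f)%N%:Z * (p%:Z * W) - qm1 p f.+1 * W.
  rewrite /qm1 expnS PoszM; ring.
apply: rpredB; first exact: (dvdz_mull _ h1).
apply/dvdzP; exists W; by rewrite mulrC.
Qed.

Lemma q_dvd_all (p f : nat) (tau0 : 'I_f) (v : 'I_f -> int) :
  (qm1 p f %| Omega p tau0 v)%Z -> forall k, (qm1 p f %| Omega p k v)%Z.
Proof.
move=> h k.
have hj : forall j, (qm1 p f %| Omega p (oshift tau0 j) v)%Z.
  elim=> [|j IH]; first by rewrite oshift0.
  by rewrite -addn1 -oshiftD; apply: q_dvd_step.
by case: (oshift_surj tau0 k) => j <-.
Qed.

Lemma mul_p_bounds (k p lo hi : int) : 0 < p -> lo * p < k * p -> k * p < hi * p -> lo < k < hi.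
Proof. move=> h1 h2 h3. by rewrite -(ltr_pM2r h1) h2 -(ltr_pM2r h1) h3. Qed.
Lemma mul_p1 (k p : int) : 0 < p -> - p < k * p -> k * p < 2 * p -> k * p != 0 -> k = 1.
Proof.
move=> h1 h2 h3 /eqP h4.
have /andP [l1 l2] := @mul_p_bounds k p (-1) 2 h1 ltac:(by rewrite mulN1r) h3.
have : k != 0 by apply/eqP => hk; apply: h4; rewrite hk mul0r.
move/eqP; lia.
Qed.
Lemma mul_pm1 (k p : int) : 0 < p -> - (2 * p) < k * p -> k * p < p -> k * p != 0 -> k = -1.
Proof.
move=> h1 h2 h3 /eqP h4.
have /andP [l1 l2] := @mul_p_bounds k p (-2) 1 h1 ltac:(by rewrite mulNr) ltac:(by rewrite mul1r).
have : k != 0 by apply/eqP => hk; apply: h4; rewrite hk mul0r.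
move/eqP; lia.
Qed.
Lemma m_is_1_B (m m' p D : int) : 0 < p -> -2 <= m -> m <= 1 -> m + D = p * m' ->
  3 <= D -> D <= p - 1 -> m = 1.
Proof.
move=> h1 h2 h3 h4 h5 h6.
have /andP [l1 l2] := @mul_p_bounds m' p 0 2 h1 ltac:(rewrite mul0r mulrC -h4; lia)
   ltac:(rewrite mulrC -h4; lia).
have hm' : m' = 1 by lia.
rewrite hm' mulr1 in h4; lia.
Qed.
Lemma m_is_1_A (m m' p D : int) : 0 < p -> -2 <= m -> m <= 1 -> m + D = p * m' ->
  3 - 2 * p <= D -> D <= - p - 1 -> m = 1.
Proof.
move=> h1 h2 h3 h4 h5 h6.
have /andP [l1 l2] := @mul_p_bounds m' p (-2) 0 h1 ltac:(rewrite [m' * p]mulrC -h4; lia)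
   ltac:(rewrite mul0r [m' * p]mulrC -h4; lia).
have hm' : m' = -1 by lia.
rewrite hm' mulrN1 in h4; lia.
Qed.
Theorem proposition5p11
  (p f e : nat) (hp : prime p) (he : (0 < e)%N)
  (tau0 : 'I_f)                       (* reference embedding tau_0 *)
  (u1 u2 : int)                       (* chi_i|_{I_K} = omega_{tau0}^{u_i} *)
  (n : 'I_f -> nat)
  (hn : forall tau, (1 <= n tau <= p)%N)
  (hn' : exists tau, (n tau < p)%N)
  (hchi : (u1 - u2 = Omega p tau0 (fun tau => (n tau)%:Z) %[mod qm1 p f])%Z)
  (hgen : forall tau, (e <= n tau <= p - e)%N)   (* weakly generic *)
  (a b : 'I_f -> int)
  (hab : forall tau, 0 <= a tau - b tau <= p%:Z - 1)
  (J : {set 'I_f}) (x : 'I_f -> nat)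
  (hmax : maximalS p e tau0 u1 u2 a b J x) :
  forall (tau : 'I_f) (c : int), inI e a b J x tau c ->
    (vp_pos p (xi p e a b J x tau - c * qm1 p f)
     <-> (c = tt e a b J x tau
          \/ ((forall kappa : 'I_f,
                 [/\ tt e a b J x kappa = 0,
                     sJx a b J x kappa = p%:Z - 1 + e%:Z
                   & rr a b kappa = p%:Z])
              /\ c = p%:Z))).
Proof.
move=> tau c hI.
have hp2 := prime_gt1 hp.
have hf := ord_pos tau.
case: hmax => [[hx hu1 hu2] _].
pose d := fun k => 2 * sJx a b J x k - rr a b k + 1 - e%:Z - (n k)%:Z.
pose c1 := fun k => if k \in J then a k + 1 + (x k)%:Z else b k + (x k)%:Z.
pose c2 := fun k => if k \in J then b k + e%:Z - 1 - (x k)%:Z else a k + e%:Z - (x k)%:Z.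
have hd0 : (qm1 p f %| Omega p tau0 d)%Z.
  have h1 : (qm1 p f %| u1 - Omega p tau0 c1)%Z by rewrite -eqz_mod_dvd; apply/eqP.
  have h2 : (qm1 p f %| u2 - Omega p tau0 c2)%Z by rewrite -eqz_mod_dvd; apply/eqP.
  have h3 : (qm1 p f %| (u1 - u2) - Omega p tau0 (fun k => (n k)%:Z))%Z
    by rewrite -eqz_mod_dvd; apply/eqP.
  have -> : Omega p tau0 d = Omega p tau0 c1 - Omega p tau0 c2 - Omega p tau0 (fun k => (n k)%:Z).
    rewrite -!OmegaB /Omega; apply: eq_bigr => j _; congr (_ * _).
    rewrite /d /c1 /c2 /sJx /rr; case: ifP => _; ring.
  have -> : Omega p tau0 c1 - Omega p tau0 c2 - Omega p tau0 (fun k => (n k)%:Z)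
    = - ((u1 - Omega p tau0 c1) - (u2 - Omega p tau0 c2) - ((u1 - u2) - Omega p tau0 (fun k => (n k)%:Z))) by ring.
  by rewrite rpredN; apply: rpredB => //; apply: rpredB.
have hW := q_dvd_all hd0.
clear hu1 hu2 hchi hn' hd0 c1 c2.
have hdb : forall k, 1 - 2 * p%:Z <= d k <= p%:Z - 1.
  move=> k; rewrite /d /sJx /rr; have := hab k; have := hx k; have := hgen k.
  move=> /andP [g1 g2] hxk /andP [ab1 ab2].
  case: ifP => _; apply/andP; split; lia.
have hdJ : forall k, k \notin J -> d k <= -2.
  move=> k hk; rewrite /d /sJx /rr (negbTE hk); have := hab k; have := hx k; have := hgen k.
  move=> /andP [g1 g2] hxk /andP [ab1 ab2]; lia.
have hq1 : Omega p tau (fun _ => p%:Z - 1) = qm1 p f by rewrite Omega_const mulrC G_q.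
have hG := G_pos p hf.
have hGq := G_q p f.
have hWle : Omega p tau d <= qm1 p f.
  rewrite -hq1; apply: Omega_le => k; by case/andP: (hdb k).
have hWge : G p f * (1 - 2 * p%:Z) <= Omega p tau d.
  rewrite -(Omega_const p tau); apply: Omega_le => k; by case/andP: (hdb k).
have hs := Omega_shift p tau d.
case/dvdzP: (hW tau) => m hm.
case/dvdzP: (hW (oshift tau 1)) => m' hm'.
have hqpos : 0 < qm1 p f by rewrite -hGq; nia.
have hmm : m + d tau = p%:Z * m'.
  apply: (mulIf (lt0r_neq0 hqpos)); rewrite mulrDl -hm -mulrA -hm' -hs; ring.
have hmle : m <= 1 by nia.
pose v := fun k => sJx a b J x k - tt e a b J x k.
have hsv := Omega_shift p tau v.
have hE : xi p e a b J x tau - c * qm1 p f =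
   p%:Z * ((p ^ f.-1)%N%:Z * (tt e a b J x tau - c) + Omega p (oshift tau 1) v)
   + (c - tt e a b J x tau).
  rewrite /xi -/v.
  have -> : Omega p tau v = p%:Z * Omega p (oshift tau 1) v - qm1 p f * v tau by rewrite -hsv; ring.
  have hpf : (p ^ f)%N%:Z = p%:Z * (p ^ f.-1)%N%:Z by rewrite -PoszM -expnS prednK.
  rewrite /v /qm1 hpf; ring.
have hdiv : vp_pos p (xi p e a b J x tau - c * qm1 p f) <-> (p%:Z %| c - tt e a b J x tau)%Z.
  rewrite /vp_pos hE rpredDl //; apply: dvdz_mulr; exact: dvdzz.
rewrite hdiv.
have he2p : (e + e <= p)%N by have := hgen tau; lia.
have hmge : (2 <= e)%N -> -2 <= m.
  move=> he2.
  have hp4 : (4 <= p)%N by lia.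
  rewrite hm -hGq in hWge.
  have h' : G p f * (1 - 2 * p%:Z) <= G p f * (m * (p%:Z - 1)).
    have -> : G p f * (m * (p%:Z - 1)) = m * ((p%:Z - 1) * G p f) by ring.
    exact: hWge.
  rewrite ler_pM2l in h'; last by apply: lt_le_trans hG.
  clear -h' hp4; nia.
have hall1 : m = 1 -> forall k, d k = p%:Z - 1.
  move=> hm1; apply: (Omega_eq_le (ltnW hp2) (tau := tau)).
    by move=> k; case/andP: (hdb k).
  by rewrite hq1 hm hm1 mul1r.
split.
- move=> hd; case: (eqVneq c (tt e a b J x tau)) => [-> | hct]; first by left.
  case/dvdzP: hd => k hk.
  have hxe := hx tau; have /andP [g1 g2] := hgen tau; have /andP [ab1 ab2] := hab tau.
  move: hI; rewrite /inI; case: ifP => hJ.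
  + case => [hc|/andP [hc1 hc2]]; first by move: hct; rewrite hc eqxx.
    have hxt : sJx a b J x tau = a tau - b tau + 1 + (x tau)%:Z by rewrite /sJx hJ /rr.
    have htt : tt e a b J x tau = e%:Z - 1 - (x tau)%:Z by rewrite /tt hxt; ring.
    have hdt : d tau = a tau - b tau + 2 * (x tau)%:Z + 2 - e%:Z - (n tau)%:Z by rewrite /d hxt /rr; ring.
    rewrite /rr in hc1; rewrite hxt in hc2; rewrite htt in hk hct.
    have hk1 : k = 1.
      apply: (@mul_p1 k p%:Z); [lia | rewrite -hk; lia | rewrite -hk; lia | by rewrite -hk subr_eq0].
    rewrite hk1 mul1r in hk.
    have hm2 := hmge ltac:(lia).
    have hm1 : m = 1.
      apply: (@m_is_1_B m m' p%:Z (d tau)) => //; [lia | rewrite hdt; lia | rewrite hdt; lia].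
    have hA := hall1 hm1.
    right; split.
      move=> kap; have := hA kap; rewrite /d /tt /sJx /rr.
      have := hx kap; have /andP [g3 g4] := hgen kap; have /andP [ab3 ab4] := hab kap.
      case: (boolP (kap \in J)) => hkap; last first.
        move=> _ hdk; have := hdJ kap hkap; rewrite /d /sJx /rr (negbTE hkap); lia.
      move=> hxk hdk; split; lia.
    have := hA tau; rewrite hdt => hdt'; lia.
  + move=> /andP [hc1 hc2]; exfalso.
    have hxt : sJx a b J x tau = (x tau)%:Z by rewrite /sJx hJ.
    have htt : tt e a b J x tau = a tau - b tau + e%:Z - (x tau)%:Z by rewrite /tt hxt.
    have hdt : d tau = 2 * (x tau)%:Z - (a tau - b tau) - e%:Z - (n tau)%:Z by rewrite /d hxt /rr; ring.
    rewrite hxt in hc2; rewrite htt in hk hct.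
    have hk1 : k = -1.
      apply: (@mul_pm1 k p%:Z); [lia | rewrite -hk; lia | rewrite -hk; lia | by rewrite -hk subr_eq0].
    rewrite hk1 mulN1r in hk.
    have hm2 := hmge ltac:(lia).
    have hm1 : m = 1.
      apply: (@m_is_1_A m m' p%:Z (d tau)) => //; [lia | rewrite hdt; lia | rewrite hdt; lia].
    have := hall1 hm1 tau; lia.
- case => [-> | [hA ->]]; first by rewrite subrr; apply: rpred0.
  have [ht _ _] := hA tau; rewrite ht subr0; exact: dvdzz.
Qed.
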